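(* Let $X$ be a topological space with $|X| \ge 3$. For each $i \in \{0,1,2,3,3\tfrac12,5,6\}$, $X$ is a $T_i$-space if and only if every card of $X$ is a $T_i$-space. Consequently, for these $i$, if $Z$ is a reconstruction of $X$ then $X$ is $T_i$ if and only if $Z$ is $T_i$. Moreover, if every card of $X$ is $T_3$ and at least one card of $X$ is $T_4$, then $X$ is $T_4$.
   Context: For a topological space $X$ and $x \in X$, the set $X\setminus\{x\}$ carries the subspace topology. A card of $X$ is a space homeomorphic to $X \setminus \{x\}$ for some $x \in X$. The deck of $X$ is $\mathcal{D}(X)=\{[X\setminus\{x\}]_\sim : x \in X\}$, where $[Y]_\sim$ denotes the homeomorphism class of $Y$. A space $Z$ is a reconstruction of $X$ if $\mathcal{D}(Z)=\mathcal{D}(X)$. Separation axioms include the lower ones: $T_3$ means regular and $T_1$; $T_{3\frac12}$ (Tychonoff) means completely regular and $T_1$; $T_4$ means normal and $T_1$; $T_5$ means every subspace is $T_4$; $T_6$ means $T_4$ and every closed set is a $G_\delta$-set. *)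

(* Defs.v *)
From Stdlib Require Import Reals.
Open Scope R_scope.

Record TopSpace := {
  carrier :> Type;
  is_open : (carrier -> Prop) -> Prop;
  open_full : is_open (fun _ => True);
  open_inter : forall U V, is_open U -> is_open V ->
                 is_open (fun x => U x /\ V x);
  open_union : forall F : (carrier -> Prop) -> Prop,
                 (forall U, F U -> is_open U) ->
                 is_open (fun x => exists U, F U /\ U x)
}.

Arguments is_open {t} _.

Definition is_closed {X : TopSpace} (A : X -> Prop) : Prop :=
  is_open (fun x => ~ A x).

Definition continuous {X Y : TopSpace} (f : X -> Y) : Prop :=
  forall V : Y -> Prop, is_open V -> is_open (fun x => V (f x)).

Definition homeomorphic (X Y : TopSpace) : Prop :=
  exists (f : X -> Y) (g : Y -> X),
    (forall x, g (f x) = x) /\ (forall y, f (g y) = y) /\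
    continuous f /\ continuous g.

Definition sub_open (X : TopSpace) (P : X -> Prop)
  (W : {x : X | P x} -> Prop) : Prop :=
  exists U : X -> Prop, is_open U /\ forall s, W s <-> U (proj1_sig s).

Lemma sub_open_full (X : TopSpace) (P : X -> Prop) : sub_open X P (fun _ => True).
Proof. exists (fun _ => True); split; [apply open_full | tauto]. Qed.

Lemma sub_open_inter (X : TopSpace) (P : X -> Prop) U V :
  sub_open X P U -> sub_open X P V -> sub_open X P (fun x => U x /\ V x).
Proof.
  intros [U' [HU HU']] [V' [HV HV']].
  exists (fun x => U' x /\ V' x); split; [apply open_inter; auto|].
  intro s; rewrite HU', HV'; tauto.
Qed.

Lemma sub_open_union (X : TopSpace) (P : X -> Prop) (F : ({x : X | P x} -> Prop) -> Prop) :
  (forall U, F U -> sub_open X P U) ->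
  sub_open X P (fun x => exists U, F U /\ U x).
Proof.
  intros H.
  exists (fun y => exists U', (exists U, F U /\ is_open U' /\
                     forall s, U s <-> U' (proj1_sig s)) /\ U' y).
  split.
  - apply (open_union X (fun U' => exists U, F U /\ is_open U' /\
                     forall s, U s <-> U' (proj1_sig s))).
    intros U' [U [_ [HO _]]]; exact HO.
  - intro s; split.
    + intros [U [HF HU]]. destruct (H U HF) as [U' [HO HE]].
      exists U'; split; [exists U; auto | apply HE; auto].
    + intros [U' [[U [HF [_ HE]]] HU']]. exists U; split; auto.
      apply HE; auto.
Qed.

Definition subspace (X : TopSpace) (P : X -> Prop) : TopSpace :=
  {| carrier := {x : X | P x};
     is_open := sub_open X P;
     open_full := sub_open_full X P;
     open_inter := sub_open_inter X P;
     open_union := sub_open_union X P |}.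

Definition remove_point (X : TopSpace) (x : X) : TopSpace :=
  subspace X (fun y => y <> x).

Definition is_card (Y X : TopSpace) : Prop :=
  exists x : X, homeomorphic Y (remove_point X x).

Definition reconstruction (Z X : TopSpace) : Prop :=
  forall Y : TopSpace, is_card Y Z <-> is_card Y X.

Definition T0 (X : TopSpace) : Prop :=
  forall x y : X, x <> y -> exists U, is_open U /\
    ((U x /\ ~ U y) \/ (U y /\ ~ U x)).

Definition T1 (X : TopSpace) : Prop :=
  forall x y : X, x <> y -> exists U, is_open U /\ U x /\ ~ U y.

Definition T2 (X : TopSpace) : Prop :=
  forall x y : X, x <> y -> exists U V, is_open U /\ is_open V /\
    U x /\ V y /\ (forall z, ~ (U z /\ V z)).

Definition regular (X : TopSpace) : Prop :=
  forall (A : X -> Prop) (x : X), is_closed A -> ~ A x ->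
    exists U V, is_open U /\ is_open V /\ (forall a, A a -> U a) /\ V x /\
      (forall z, ~ (U z /\ V z)).

Definition T3 (X : TopSpace) : Prop := regular X /\ T1 X.

Definition continuous_real {X : TopSpace} (f : X -> R) : Prop :=
  forall (y : X) (eps : R), 0 < eps ->
    exists U, is_open U /\ U y /\ forall z, U z -> Rabs (f z - f y) < eps.

Definition completely_regular (X : TopSpace) : Prop :=
  forall (A : X -> Prop) (x : X), is_closed A -> ~ A x ->
    exists f : X -> R, continuous_real f /\
      (forall z, 0 <= f z <= 1) /\ f x = 0 /\ (forall a, A a -> f a = 1).

Definition T3half (X : TopSpace) : Prop := completely_regular X /\ T1 X.

Definition normal (X : TopSpace) : Prop :=
  forall A B : X -> Prop, is_closed A -> is_closed B ->
    (forall z, ~ (A z /\ B z)) ->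
    exists U V, is_open U /\ is_open V /\ (forall a, A a -> U a) /\
      (forall b, B b -> V b) /\ (forall z, ~ (U z /\ V z)).

Definition T4 (X : TopSpace) : Prop := normal X /\ T1 X.

Definition T5 (X : TopSpace) : Prop :=
  forall P : X -> Prop, T4 (subspace X P).

Definition G_delta {X : TopSpace} (A : X -> Prop) : Prop :=
  exists U : nat -> X -> Prop, (forall n, is_open (U n)) /\
    forall x, A x <-> forall n, U n x.

Definition T6 (X : TopSpace) : Prop :=
  T4 X /\ forall A : X -> Prop, is_closed A -> G_delta A.

(** Indices i in {0,1,2,3,3 1/2,5,6} (4 is treated separately). *)
Inductive sep_index := i0 | i1 | i2 | i3 | i3half | i5 | i6.

Definition T_ (i : sep_index) (X : TopSpace) : Prop :=
  match i with
  | i0 => T0 X | i1 => T1 X | i2 => T2 X | i3 => T3 X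
  | i3half => T3half X | i5 => T5 X | i6 => T6 X
  end.

Definition at_least_three (X : TopSpace) : Prop :=
  exists a b c : X, a <> b /\ a <> c /\ b <> c.

(* Main.v *)
Require Import Defs.
From Stdlib Require Import Reals Lra Classical ClassicalEpsilon FunctionalExtensionality PropExtensionality ProofIrrelevance Arith Lia.

Lemma open_ext {X : TopSpace} (U V : X -> Prop) :
  is_open U -> (forall x, U x <-> V x) -> is_open V.
Proof.
  intros HU H. assert (E : U = V).
  { apply functional_extensionality; intro x; apply propositional_extensionality; auto. }
  subst; auto.
Qed.

Lemma open_union2 {X : TopSpace} (U V : X -> Prop) :
  is_open U -> is_open V -> is_open (fun x => U x \/ V x).
Proof.
  intros HU HV.
  apply (open_ext _ _ (open_union X (fun W => W = U \/ W = V)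
    (fun W HW => ltac:(destruct HW; subst; auto)))).
  intro x; split.
  - intros [W [[->| ->] Hx]]; auto.
  - intros [Hx|Hx]; [exists U | exists V]; auto.
Qed.

Lemma open_cunion {X : TopSpace} (P : nat -> X -> Prop) :
  (forall n, is_open (P n)) -> is_open (fun x => exists n, P n x).
Proof.
  intros H.
  apply (open_ext _ _ (open_union X (fun W => exists n, W = P n)
    (fun W HW => ltac:(destruct HW as [n ->]; auto)))).
  intro x; split.
  - intros [W [[n ->] Hx]]; eauto.
  - intros [n Hx]; exists (P n); eauto.
Qed.

Lemma open_finter {X : TopSpace} (P : nat -> X -> Prop) (n : nat) :
  (forall k, is_open (P k)) -> is_open (fun x => forall k, (k <= n)%nat -> P k x).
Proof.
  intros H. induction n.
  - apply (open_ext _ _ (H 0%nat)). intro x; split.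
    + intros Hx k Hk. assert (k = 0%nat) by lia. subst; auto.
    + intros Hx; apply Hx; lia.
  - apply (open_ext _ _ (open_inter _ _ _ IHn (H (S n)))). intro x; split.
    + intros [H1 H2] k Hk. destruct (Nat.eq_dec k (S n)); [subst; auto|apply H1; lia].
    + intros Hx; split; [intros k Hk; apply Hx; lia | apply Hx; lia].
Qed.

Lemma closed_compl {X : TopSpace} (U : X -> Prop) : is_open U -> is_closed (fun x => ~ U x).
Proof.
  intros H; unfold is_closed; apply (open_ext _ _ H). intro x; split; [tauto|apply NNPP].
Qed.

Lemma T1_open_neq {X : TopSpace} (z : X) : T1 X -> is_open (fun t => t <> z).
Proof.
  intros H.
  apply (open_ext _ _ (open_union X (fun U => is_open U /\ ~ U z) (fun U HU => proj1 HU))).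
  intro t; split.
  - intros [U [[_ Hz] Ht]] E; subst; auto.
  - intros Ht. destruct (H t z Ht) as [U [HU [H1 H2]]]. exists U; auto.
Qed.

Definition embedding {S T : TopSpace} (e : S -> T) : Prop :=
  (forall a b, e a = e b -> a = b) /\
  (forall U, is_open U -> is_open (fun s => U (e s))) /\
  (forall W, is_open W -> exists U, is_open U /\ forall s, W s <-> U (e s)).

Lemma embed_comp {S T U : TopSpace} (e1 : S -> T) (e2 : T -> U) :
  embedding e1 -> embedding e2 -> embedding (fun s => e2 (e1 s)).
Proof.
  intros [i1 [p1 o1]] [i2 [p2 o2]]. split; [|split].
  - intros a b E; auto.
  - intros V HV; apply (p1 _ (p2 _ HV)).
  - intros W HW. destruct (o1 W HW) as [V [HV EV]]. destruct (o2 V HV) as [V' [HV' EV']].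
    exists V'; split; auto. intro s; rewrite EV; auto.
Qed.

Lemma sub_embed (X : TopSpace) (P : X -> Prop) :
  @embedding (subspace X P) X (fun s => proj1_sig s).
Proof.
  split; [|split].
  - intros [a ha] [b hb]; simpl; intros ->. f_equal; apply proof_irrelevance.
  - intros U HU. exists U; split; auto; tauto.
  - intros W [U [HU E]]. exists U; auto.
Qed.

Lemma embed_closed {S T : TopSpace} (e : S -> T) (A : S -> Prop) :
  embedding e -> is_closed A -> exists A', is_closed A' /\ forall s, A s <-> A' (e s).
Proof.
  intros [_ [_ o]] HA. destruct (o _ HA) as [U [HU E]].
  exists (fun t => ~ U t); split; [apply closed_compl; auto|].
  intro s; rewrite <- E; split; [tauto|apply NNPP].
Qed.

Lemma embed_pre_closed {S T : TopSpace} (e : S -> T) (A : T -> Prop) :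
  embedding e -> is_closed A -> is_closed (fun s => A (e s)).
Proof. intros [_ [p _]] HA; apply (p _ HA). Qed.

Lemma homeo_embed (Y Z : TopSpace) : homeomorphic Y Z ->
  exists f : Y -> Z, embedding f /\ forall z, exists y, f y = z.
Proof.
  intros [f [g [gf [fg [cf cg]]]]]. exists f; split; [split; [|split]|].
  - intros a b E. rewrite <- (gf a), <- (gf b), E; auto.
  - exact cf.
  - intros W HW. exists (fun z => W (g z)); split; [apply cg; auto|].
    intro s; rewrite gf; tauto.
  - intro z; exists (g z); auto.
Qed.

Lemma homeo_sym (Y Z : TopSpace) : homeomorphic Y Z -> homeomorphic Z Y.
Proof. intros [f [g [a [b [c d]]]]]. exists g, f; auto. Qed.

Lemma homeo_refl (Y : TopSpace) : homeomorphic Y Y.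
Proof. exists (fun y => y), (fun y => y); repeat split; intros V HV; exact HV. Qed.

Lemma card_rp (X : TopSpace) (z : X) : is_card (remove_point X z) X.
Proof. exists z; apply homeo_refl. Qed.

Section Her.
Context {S T : TopSpace} (e : S -> T) (He : embedding e).

Lemma T0_emb : T0 T -> T0 S.
Proof.
  destruct He as [i [p _]]. intros H x y Hxy.
  destruct (H (e x) (e y) (fun E => Hxy (i _ _ E))) as [U [HU HH]].
  exists (fun s => U (e s)); split; auto.
Qed.

Lemma T1_emb : T1 T -> T1 S.
Proof.
  destruct He as [i [p _]]. intros H x y Hxy.
  destruct (H (e x) (e y) (fun E => Hxy (i _ _ E))) as [U [HU HH]].
  exists (fun s => U (e s)); split; auto.
Qed.

Lemma T2_emb : T2 T -> T2 S.
Proof.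
  destruct He as [i [p _]]. intros H x y Hxy.
  destruct (H (e x) (e y) (fun E => Hxy (i _ _ E))) as [U [V [HU [HV [h1 [h2 h3]]]]]].
  exists (fun s => U (e s)), (fun s => V (e s)); repeat split; auto.
  all: try (intro z; apply h3).
Qed.

Lemma reg_emb : regular T -> regular S.
Proof.
  intros H A x HA Hx. destruct (embed_closed e A He HA) as [A' [HA' E]].
  destruct He as [i [p _]].
  destruct (H A' (e x) HA' (fun h => Hx (proj2 (E x) h))) as [U [V [HU [HV [h1 [h2 h3]]]]]].
  exists (fun s => U (e s)), (fun s => V (e s)); repeat split; auto.
  - intros a Ha; apply h1, E, Ha.
  all: try (intro z; apply h3).
Qed.

Lemma creg_emb : completely_regular T -> completely_regular S.
Proof.
  intros H A x HA Hx. destruct (embed_closed e A He HA) as [A' [HA' E]].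
  destruct He as [i [p _]].
  destruct (H A' (e x) HA' (fun h => Hx (proj2 (E x) h))) as [f [cf [h1 [h2 h3]]]].
  exists (fun s => f (e s)); repeat split; auto.
  - intros y eps Heps. destruct (cf (e y) eps Heps) as [U [HU [Hy HH]]].
    exists (fun s => U (e s)); repeat split; auto.
  - apply h1.
  - apply h1.
  - intros a Ha; apply h3, E, Ha.
Qed.

Lemma gdelta_emb : (forall A : T -> Prop, is_closed A -> G_delta A) ->
  forall A : S -> Prop, is_closed A -> G_delta A.
Proof.
  intros H A HA. destruct (embed_closed e A He HA) as [A' [HA' E]].
  destruct He as [i [p _]].
  destruct (H A' HA') as [U [HU EU]].
  exists (fun n s => U n (e s)); split; [intro n; apply p; auto|].
  intro x; rewrite E; apply EU.
Qed.

Lemma normal_surj : (forall t, exists s, e s = t) -> normal T -> normal S.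
Proof.
  intros Hs H A B HA HB Hd.
  destruct (embed_closed e A He HA) as [A' [HA' EA]].
  destruct (embed_closed e B He HB) as [B' [HB' EB]].
  destruct He as [i [p _]].
  assert (Hd' : forall t, ~ (A' t /\ B' t)).
  { intros t [h1 h2]. destruct (Hs t) as [s <-]. apply (Hd s); split; [apply EA|apply EB]; auto. }
  destruct (H A' B' HA' HB' Hd') as [U [V [HU [HV [h1 [h2 h3]]]]]].
  exists (fun s => U (e s)), (fun s => V (e s)); repeat split; auto.
  - intros a Ha; apply h1, EA, Ha.
  - intros a Ha; apply h2, EB, Ha.
  all: try (intro z; apply h3).
Qed.
End Her.

Lemma T4_surj {S T : TopSpace} (e : S -> T) : embedding e -> (forall t, exists s, e s = t) ->
  T4 T -> T4 S.
Proof. intros He Hs [H1 H2]; split; [eapply normal_surj|eapply T1_emb]; eauto. Qed.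

Lemma T5_T4 {S T : TopSpace} (e : S -> T) : embedding e -> T5 T -> T4 S.
Proof.
  intros He H.
  set (Q := fun t => exists s, e s = t).
  assert (e' : forall s, Q (e s)) by (intro s; exists s; auto).
  apply (T4_surj (T := subspace T Q) (fun s => exist Q (e s) (e' s))).
  - destruct He as [i [p o]]. split; [|split].
    + intros a b E. apply i. exact (f_equal (@proj1_sig _ _) E).
    + intros U [U' [HU' E]]. simpl. apply (open_ext _ _ (p U' HU')). intro s.
      rewrite (E (exist Q (e s) (e' s))). simpl; tauto.
    + intros W HW. destruct (o W HW) as [U [HU E]].
      exists (fun q : subspace T Q => U (proj1_sig q)); split; auto.
      exists U; split; auto; tauto.
  - intros [t [s Hs]]. exists s. subst. f_equal; apply proof_irrelevance.
  - apply H.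
Qed.

Lemma T5_emb {S T : TopSpace} (e : S -> T) : embedding e -> T5 T -> T5 S.
Proof.
  intros He H P. apply (T5_T4 (fun s : subspace S P => e (proj1_sig s))); auto.
  apply (embed_comp (fun s : subspace S P => proj1_sig s) e); auto. apply sub_embed.
Qed.

Lemma third_point (X : TopSpace) : at_least_three X -> forall x y : X, exists z, z <> x /\ z <> y.
Proof.
  intros [a [b [c [hab [hac hbc]]]]] x y.
  apply NNPP; intro N.
  assert (H : forall z, z = x \/ z = y).
  { intro z. apply NNPP; intro M. apply N; exists z; tauto. }
  destruct (H a), (H b), (H c); subst; congruence.
Qed.

Lemma lift_open0 (X : TopSpace) (z : X) (W : remove_point X z -> Prop) :
  is_open W -> exists U, is_open U /\ forall s, W s <-> U (proj1_sig s).
Proof. intros [U H]; exists U; exact H. Qed.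

Lemma lift_open (X : TopSpace) (z : X) (W : remove_point X z -> Prop) : T1 X ->
  is_open W -> exists U, is_open U /\ (forall t, U t -> t <> z) /\
     forall s, W s <-> U (proj1_sig s).
Proof.
  intros H1 [U [HU E]]. exists (fun t => U t /\ t <> z). split; [|split].
  - apply open_inter; auto; apply T1_open_neq; auto.
  - tauto.
  - intros [s hs]; simpl; rewrite (E (exist _ s hs)); simpl; tauto.
Qed.

Definition inc {X : TopSpace} {z : X} (t : X) (h : t <> z) : remove_point X z :=
  exist (fun y => y <> z) t h.

Lemma T0_back (X : TopSpace) : at_least_three X ->
  (forall z : X, T0 (remove_point X z)) -> T0 X.
Proof.
  intros H3 H x y Hxy. destruct (third_point X H3 x y) as [z [hx hy]].
  assert (hx' : x <> z) by auto. assert (hy' : y <> z) by auto.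
  assert (N : inc x hx' <> inc y hy') by (intro E; apply Hxy; exact (f_equal (@proj1_sig _ _) E)).
  destruct (H z _ _ N) as [U [HU HH]]. destruct (lift_open0 X z U HU) as [U' [HU' E]].
  exists U'; split; auto. rewrite !E in HH. exact HH.
Qed.

Lemma T1_back (X : TopSpace) : at_least_three X ->
  (forall z : X, T1 (remove_point X z)) -> T1 X.
Proof.
  intros H3 H x y Hxy. destruct (third_point X H3 x y) as [z [hx hy]].
  assert (hx' : x <> z) by auto. assert (hy' : y <> z) by auto.
  assert (N : inc x hx' <> inc y hy') by (intro E; apply Hxy; exact (f_equal (@proj1_sig _ _) E)).
  destruct (H z _ _ N) as [U [HU HH]]. destruct (lift_open0 X z U HU) as [U' [HU' E]].
  exists U'; split; auto. rewrite !E in HH. exact HH.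
Qed.

Lemma T2_back (X : TopSpace) : at_least_three X -> T1 X ->
  (forall z : X, T2 (remove_point X z)) -> T2 X.
Proof.
  intros H3 H1 H x y Hxy. destruct (third_point X H3 x y) as [z [hx hy]].
  assert (hx' : x <> z) by auto. assert (hy' : y <> z) by auto.
  assert (N : inc x hx' <> inc y hy') by (intro E; apply Hxy; exact (f_equal (@proj1_sig _ _) E)).
  destruct (H z _ _ N) as [U [V [HU [HV [h1 [h2 h3]]]]]].
  destruct (lift_open X z U H1 HU) as [U' [HU' [NU EU]]].
  destruct (lift_open X z V H1 HV) as [V' [HV' [NV EV]]].
  exists U', V'; repeat split; auto.
  - apply EU in h1; exact h1.
  - apply EV in h2; exact h2.
  - intros t [a b]. apply (h3 (inc t (NU t a))). split; [apply EU|apply EV]; auto.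
Qed.

Lemma reg_back (X : TopSpace) : T1 X ->
  (forall z : X, regular (remove_point X z)) -> regular X.
Proof.
  intros H1 H A x HA Hx.
  destruct (classic (exists z, z <> x /\ ~ A z)) as [[z [hzx hz]]|N].
  - assert (hx' : x <> z) by auto.
    assert (HAY : is_closed (fun s : remove_point X z => A (proj1_sig s)))
      by (apply (embed_pre_closed _ A (sub_embed X _)); auto).
    destruct (H z _ (inc x hx') HAY Hx) as [U [V [HU [HV [h1 [h2 h3]]]]]].
    destruct (lift_open X z U H1 HU) as [U' [HU' [NU EU]]].
    destruct (lift_open X z V H1 HV) as [V' [HV' [NV EV]]].
    exists U', V'; repeat split; auto.
    + intros a Ha. assert (ha : a <> z) by (intro E; subst; auto).
      apply (EU (inc a ha)), h1; exact Ha.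
    + apply EV in h2; exact h2.
    + intros t [a b]. apply (h3 (inc t (NU t a))). split; [apply EU|apply EV]; auto.
  - exists (fun t => t <> x), (fun t => ~ A t); repeat split; auto.
    + apply T1_open_neq; auto.
    + intros a Ha E; subst; auto.
    + intros t [a b]. apply N; exists t; auto.
Qed.

Lemma creg_back (X : TopSpace) : T1 X -> regular X ->
  (forall z : X, completely_regular (remove_point X z)) -> completely_regular X.
Proof.
  intros H1 Hr H A x HA Hx.
  destruct (classic (exists z, z <> x /\ ~ A z)) as [[z [hzx hz]]|N].
  - assert (hx' : x <> z) by auto.
    assert (HC : is_closed (fun t => A t \/ t = x)).
    { unfold is_closed. apply (open_ext _ _ (open_inter _ _ _ HA (T1_open_neq x H1))).
      intro t; tauto. }
    destruct (Hr _ z HC ltac:(tauto)) as [M [Nn [HM [HN [hM [hN hMN]]]]]].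
    assert (HB : is_closed (fun s : remove_point X z => A (proj1_sig s) \/ ~ M (proj1_sig s))).
    { apply (embed_pre_closed _ (fun t => A t \/ ~ M t) (sub_embed X _)).
      unfold is_closed. apply (open_ext _ _ (open_inter _ _ _ HA HM)).
      intro t; split; [tauto|]. intro h; split; [tauto|apply NNPP; tauto]. }
    destruct (H z _ (inc x hx') HB ltac:(simpl; intros [h|h]; auto)) as [g [cg [g01 [gx g1]]]].
    set (f := fun t : X => match excluded_middle_informative (t = z) with
                           | left _ => 1 | right h => g (inc t h) end).
    assert (fz : f z = 1) by (unfold f; destruct excluded_middle_informative; congruence).
    assert (fg : forall t (h : t <> z), f t = g (inc t h)).
    { intros t h; unfold f; destruct excluded_middle_informative as [e|h']; [congruence|].
      unfold inc; f_equal; f_equal; apply proof_irrelevance. }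
    exists f; split; [|split; [|split]].
    + intros y eps Heps. destruct (classic (y = z)) as [->|hy].
      * exists Nn; repeat split; auto. intros t Ht. rewrite fz.
        destruct (classic (t = z)) as [->|ht]; [rewrite fz|rewrite (fg t ht), g1].
        all: try (rewrite Rminus_diag, Rabs_R0; lra).
        simpl; right. intro Mt; apply (hMN t); auto.
      * destruct (cg (inc y hy) eps Heps) as [U [HU [Hy HH]]].
        destruct (lift_open X z U H1 HU) as [U' [HU' [NU EU]]].
        exists U'; repeat split; auto.
        -- apply EU in Hy; exact Hy.
        -- intros t Ht. rewrite (fg t (NU t Ht)), (fg y hy). apply HH, EU. exact Ht.
    + intro t; destruct (classic (t = z)) as [->|ht]; [rewrite fz; lra|rewrite (fg t ht); apply g01].
    + rewrite (fg x hx'); exact gx.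
    + intros a Ha. assert (ha : a <> z) by (intro E; subst; auto).
      rewrite (fg a ha); apply g1; simpl; auto.
  - set (f := fun t : X => if excluded_middle_informative (t = x) then 0 else 1).
    exists f; split; [|split; [|split]].
    + intros y eps Heps. destruct (classic (y = x)) as [->|hy].
      * exists (fun t => ~ A t); repeat split; auto.
        intros t Ht. assert (t = x) as -> by (apply NNPP; intro M; apply N; eauto).
        rewrite Rminus_diag, Rabs_R0; lra.
      * exists (fun t => t <> x); repeat split; auto; [apply T1_open_neq; auto|].
        intros t Ht. unfold f. do 2 destruct excluded_middle_informative; try congruence.
        rewrite Rminus_diag, Rabs_R0; lra.
    + intro t; unfold f; destruct excluded_middle_informative; lra.
    + unfold f; destruct excluded_middle_informative; congruence.
    + intros a Ha; unfold f; destruct excluded_middle_informative; auto. subst; contradiction.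
Qed.

Lemma normal_back (X : TopSpace) : T1 X ->
  (forall z : X, normal (remove_point X z)) -> normal X.
Proof.
  intros H1 H A B HA HB Hd.
  destruct (classic (exists z, ~ A z /\ ~ B z)) as [[z [hA hB]]|N].
  - assert (HAY : is_closed (fun s : remove_point X z => A (proj1_sig s)))
      by (apply (embed_pre_closed _ A (sub_embed X _)); auto).
    assert (HBY : is_closed (fun s : remove_point X z => B (proj1_sig s)))
      by (apply (embed_pre_closed _ B (sub_embed X _)); auto).
    destruct (H z _ _ HAY HBY (fun s => Hd (proj1_sig s))) as [U [V [HU [HV [h1 [h2 h3]]]]]].
    destruct (lift_open X z U H1 HU) as [U' [HU' [NU EU]]].
    destruct (lift_open X z V H1 HV) as [V' [HV' [NV EV]]].
    exists U', V'; repeat split; auto.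
    + intros a Ha. assert (ha : a <> z) by (intro E; subst; auto).
      apply (EU (inc a ha)), h1; exact Ha.
    + intros a Ha. assert (ha : a <> z) by (intro E; subst; auto).
      apply (EV (inc a ha)), h2; exact Ha.
    + intros t [a b]. apply (h3 (inc t (NU t a))). split; [apply EU|apply EV]; auto.
  - exists (fun t => ~ B t), (fun t => ~ A t); repeat split; auto.
    + intros a Ha Hb; apply (Hd a); auto.
    + intros a Ha Hb; apply (Hd a); auto.
    + intros t [a b]. apply N; eauto.
Qed.

Lemma gdelta_back (X : TopSpace) : T1 X ->
  (forall z : X, forall A : remove_point X z -> Prop, is_closed A -> G_delta A) ->
  forall A : X -> Prop, is_closed A -> G_delta A.
Proof.
  intros H1 H A HA.
  destruct (classic (exists z, ~ A z)) as [[z hz]|N].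
  - assert (HAY : is_closed (fun s : remove_point X z => A (proj1_sig s)))
      by (apply (embed_pre_closed _ A (sub_embed X _)); auto).
    destruct (H z _ HAY) as [U [HU EU]].
    assert (L : forall n, exists V, is_open V /\ (forall t, V t -> t <> z) /\
                 forall s, U n s <-> V (proj1_sig s))
      by (intro n; apply lift_open; auto).
    apply choice in L. destruct L as [V HV].
    exists V; split; [intro n; apply HV|].
    intro t. destruct (classic (t = z)) as [->|ht].
    + split; [tauto|]. intro h. destruct (HV 0%nat) as [_ [h' _]]. exfalso; apply (h' z (h 0%nat)); auto.
    + rewrite (EU (inc t ht)). split; intros h n; [apply (proj1 (proj2 (proj2 (HV n)) (inc t ht)))|apply (proj2 (proj2 (proj2 (HV n)) (inc t ht)))]; apply h.
  - exists (fun _ _ => True); split; [intro; apply open_full|].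
    intro t; split; [auto|intros _; apply NNPP; intro M; apply N; eauto].
Qed.

Lemma normal_rp_T6 (X : TopSpace) (x : X) : T6 X -> normal (remove_point X x).
Proof.
  intros [[Hn H1] Hg] A B HA HB Hd.
  destruct (embed_closed _ A (sub_embed X _) HA) as [A' [HA' EA]].
  destruct (embed_closed _ B (sub_embed X _) HB) as [B' [HB' EB]].
  assert (Hx : is_closed (fun t => t = x)).
  { unfold is_closed; apply (open_ext _ _ (T1_open_neq x H1)); tauto. }
  destruct (Hg _ Hx) as [W [HW EW]].
  assert (D : forall t, A' t -> B' t -> t = x).
  { intros t a b. apply NNPP; intro ht. apply (Hd (inc t ht)); split; [apply EA|apply EB]; auto. }
  assert (LA : forall n, exists G H, is_open G /\ is_open H /\
     (forall t, A' t /\ ~ W n t -> G t) /\ (forall t, B' t -> H t) /\ (forall t, ~ (G t /\ H t))).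
  { intro n. apply Hn.
    - unfold is_closed. apply (open_ext _ _ (open_union2 _ _ HA' (HW n))).
      intro t; split; [tauto|]. intro h. apply NNPP; intro M. apply h; split; apply NNPP; tauto.
    - exact HB'.
    - intros t [[a w] b]. apply w. rewrite (D t a b). apply EW; auto. }
  assert (LB : forall n, exists G H, is_open G /\ is_open H /\
     (forall t, B' t /\ ~ W n t -> G t) /\ (forall t, A' t -> H t) /\ (forall t, ~ (G t /\ H t))).
  { intro n. apply Hn.
    - unfold is_closed. apply (open_ext _ _ (open_union2 _ _ HB' (HW n))).
      intro t; split; [tauto|]. intro h. apply NNPP; intro M. apply h; split; apply NNPP; tauto.
    - exact HA'.
    - intros t [[a w] b]. apply w. rewrite (D t b a). apply EW; auto. }
  apply choice in LA; destruct LA as [G LA]. apply choice in LA; destruct LA as [Hb LA].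
  apply choice in LB; destruct LB as [K LB]. apply choice in LB; destruct LB as [Ha LB].
  set (U := fun t => exists n, G n t /\ forall k, (k <= n)%nat -> Ha k t).
  set (V := fun t => exists n, K n t /\ forall k, (k <= n)%nat -> Hb k t).
  assert (HU : is_open U).
  { apply open_cunion; intro n; apply open_inter; [apply LA|apply open_finter; intro k; apply LB]. }
  assert (HV : is_open V).
  { apply open_cunion; intro n; apply open_inter; [apply LB|apply open_finter; intro k; apply LA]. }
  exists (fun s : remove_point X x => U (proj1_sig s)), (fun s : remove_point X x => V (proj1_sig s)).
  destruct (sub_embed X (fun y => y <> x)) as [_ [p _]].
  repeat split; [apply p; auto|apply p; auto| | |].
  - intros [a ha] Ha'. apply EA in Ha'; simpl in *.
    assert (exists n, ~ W n a) as [n hn].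
    { apply NNPP; intro M. apply ha, EW. intro n; apply NNPP; intro M'; apply M; eauto. }
    exists n; split; [apply LA; auto|]. intros k _; apply LB; auto.
  - intros [a ha] Ha'. apply EB in Ha'; simpl in *.
    assert (exists n, ~ W n a) as [n hn].
    { apply NNPP; intro M. apply ha, EW. intro n; apply NNPP; intro M'; apply M; eauto. }
    exists n; split; [apply LB; auto|]. intros k _; apply LA; auto.
  - intros [t ht] [[n [g1 g2]] [m [k1 k2]]]; simpl in *.
    destruct (le_le_S_dec n m) as [l|l].
    + apply (proj2 (proj2 (proj2 (proj2 (LA n)))) t); split; auto.
    + apply (proj2 (proj2 (proj2 (proj2 (LB m)))) t); split; auto. apply g2; lia.
Qed.

Lemma T6_rp (X : TopSpace) (x : X) : T6 X -> T6 (remove_point X x).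
Proof.
  intros H. split; [split|].
  - apply normal_rp_T6; auto.
  - apply (T1_emb _ (sub_embed X _)). apply H.
  - apply (gdelta_emb _ (sub_embed X _)). apply H.
Qed.

Lemma T5_back (X : TopSpace) : T1 X ->
  (forall z : X, T5 (remove_point X z)) -> T5 X.
Proof.
  intros H1 H P.
  destruct (classic (exists z, ~ P z)) as [[z hz]|N].
  - assert (hP : forall s : subspace X P, proj1_sig s <> z) by (intros [s hs] E; simpl in E; subst; auto).
    apply (T5_T4 (T := remove_point X z) (fun s : subspace X P => inc (proj1_sig s) (hP s))); [|apply H].
    destruct (sub_embed X P) as [i [p o]]. split; [|split].
    + intros a b E. apply i. exact (f_equal (@proj1_sig _ _) E).
    + intros U HU. destruct (lift_open0 X z U HU) as [U' [HU' E]].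
      apply (open_ext _ _ (p U' HU')). intro s; rewrite (E (inc _ (hP s))). simpl; tauto.
    + intros W HW. destruct (o W HW) as [U [HU E]].
      exists (fun q : remove_point X z => U (proj1_sig q)); split; auto.
      exists U; split; auto; tauto.
  - apply (T4_surj (fun s : subspace X P => proj1_sig s) (sub_embed X P)).
    + intro t. assert (pt : P t) by (apply NNPP; intro M; apply N; eauto). exists (exist _ t pt); auto.
    + split; auto. apply normal_back; auto. intro z.
      apply (T5_T4 (fun s => s)); [|apply H]. split; [|split]; auto.
      intros W HW; exists W; split; auto; tauto.
Qed.

Lemma T4_part (X : TopSpace) : T1 X -> regular X -> forall x : X, normal (remove_point X x) -> normal X.
Proof.
  intros H1 Hr x Hn.
  assert (K : forall A B : X -> Prop, is_closed A -> is_closed B -> (forall z, ~ (A z /\ B z)) -> ~ B x ->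
    exists U V, is_open U /\ is_open V /\ (forall a, A a -> U a) /\
      (forall b, B b -> V b) /\ (forall z, ~ (U z /\ V z))).
  { intros A B HA HB Hd hx.
    destruct (Hr B x HB hx) as [O' [O [HO' [HO [hO' [hO hOO]]]]]].
    assert (HAY : is_closed (fun s : remove_point X x => A (proj1_sig s) \/ ~ O' (proj1_sig s))).
    { apply (embed_pre_closed _ (fun t => A t \/ ~ O' t) (sub_embed X _)).
      unfold is_closed. apply (open_ext _ _ (open_inter _ _ _ HA HO')).
      intro t; split; [tauto|]. intro h; split; [tauto|apply NNPP; tauto]. }
    assert (HBY : is_closed (fun s : remove_point X x => B (proj1_sig s)))
      by (apply (embed_pre_closed _ B (sub_embed X _)); auto).
    destruct (Hn _ _ HAY HBY) as [U [V [HU [HV [h1 [h2 h3]]]]]].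
    { intros s [[a|a] b]; [apply (Hd (proj1_sig s))|]; auto. }
    destruct (lift_open X x U H1 HU) as [U' [HU' [NU EU]]].
    destruct (lift_open X x V H1 HV) as [V' [HV' [NV EV]]].
    exists (fun t => U' t \/ O t), (fun t => V' t /\ O' t); split; [|split; [|split; [|split]]].
    - apply open_union2; auto.
    - apply open_inter; auto.
    - intros a Ha. destruct (classic (a = x)) as [->|ha]; [auto|left].
      apply (EU (inc a ha)), h1; simpl; auto.
    - intros b Hb. assert (hb : b <> x) by (intro E; subst; auto).
      split; [apply (EV (inc b hb)), h2; simpl; auto|apply hO'; auto].
    - intros t [[a|a] [b c]].
      + apply (h3 (inc t (NU t a))); split; [apply EU|apply EV]; auto.
      + apply (hOO t); auto. }
  intros A B HA HB Hd.
  destruct (classic (B x)) as [bx|bx].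
  - assert (ax : ~ A x) by (intro; apply (Hd x); auto).
    destruct (K B A HB HA (fun z h => Hd z (conj (proj2 h) (proj1 h))) ax) as [U [V [a1 [b1 [c1 [d1 e1]]]]]].
    exists V, U; repeat split; auto. intros z [h h']; apply (e1 z); auto.
  - apply K; auto.
Qed.

Lemma id_embed (Y : TopSpace) : embedding (fun y : Y => y).
Proof. split; [|split]; auto. intros W HW; exists W; split; auto; tauto. Qed.

Lemma T5_T4' (Y : TopSpace) : T5 Y -> T4 Y.
Proof. intro H; apply (T5_T4 _ (id_embed Y) H). Qed.

Lemma T2_T1 (Y : TopSpace) : T2 Y -> T1 Y.
Proof. intros H x y h. destruct (H x y h) as [U [V [a [b [c [d e]]]]]].
  exists U; repeat split; auto. intro u; apply (e y); auto. Qed.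

Lemma open_level (Y : TopSpace) (f : Y -> R) (P : R -> Prop) :
  continuous_real f ->
  (forall t, P (f t) -> exists eps, 0 < eps /\ forall r, Rabs (r - f t) < eps -> P r) ->
  is_open (fun t => P (f t)).
Proof.
  intros cf HP.
  apply (open_ext _ _ (open_union Y (fun W => is_open W /\ forall t, W t -> P (f t)) (fun W h => proj1 h))).
  intro t; split.
  - intros [W [[_ h] ht]]; auto.
  - intros h. destruct (HP t h) as [eps [he H]]. destruct (cf t eps he) as [U [HU [Ut HH]]].
    exists U; repeat split; auto.
Qed.

Lemma creg_reg (Y : TopSpace) : completely_regular Y -> regular Y.
Proof.
  intros H A x HA hx. destruct (H A x HA hx) as [f [cf [f01 [fx f1]]]].
  exists (fun t => 1/2 < f t), (fun t => f t < 1/2); split; [|split; [|split; [|split]]].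
  - apply (open_level Y f (fun r => 1/2 < r) cf). intros t h. exists (f t - 1/2); split; [lra|].
    intros r hr. apply Rabs_def2 in hr. lra.
  - apply (open_level Y f (fun r => r < 1/2) cf). intros t h. exists (1/2 - f t); split; [lra|].
    intros r hr. apply Rabs_def2 in hr. lra.
  - intros a Ha; rewrite f1; auto; lra.
  - simpl; rewrite fx; lra.
  - intros z [a b]; lra.
Qed.

Lemma main_equiv (W : TopSpace) (H3 : at_least_three W) (i : sep_index) :
  T_ i W <-> (forall Y : TopSpace, is_card Y W -> T_ i Y).
Proof.
  split.
  - intros HW Y [x Hh]. destruct (homeo_embed _ _ Hh) as [f [Hf Hs]].
    pose proof (embed_comp f (fun s : remove_point W x => proj1_sig s) Hf (sub_embed W _)) as He.
    destruct i; simpl in *.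
    + exact (T0_emb _ He HW).
    + exact (T1_emb _ He HW).
    + exact (T2_emb _ He HW).
    + destruct HW; split; [exact (reg_emb _ He H)|exact (T1_emb _ He H0)].
    + destruct HW; split; [exact (creg_emb _ He H)|exact (T1_emb _ He H0)].
    + exact (T5_emb _ He HW).
    + pose proof (T6_rp W x HW) as [H4 HG]. split; [exact (T4_surj (T := remove_point W x) f Hf Hs H4)|exact (gdelta_emb (T := remove_point W x) f Hf HG)].
  - intros HC. assert (Hc : forall z, T_ i (remove_point W z)) by (intro z; apply HC, card_rp).
    clear HC. destruct i; simpl in *.
    + apply T0_back; auto.
    + apply T1_back; auto.
    + apply T2_back; auto. apply T1_back; auto. intro z; apply T2_T1, Hc.
    + assert (H1 : T1 W) by (apply T1_back; auto; intro z; apply Hc).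
      split; auto. apply reg_back; auto; intro z; apply Hc.
    + assert (H1 : T1 W) by (apply T1_back; auto; intro z; apply Hc).
      split; auto. apply creg_back; auto; [apply reg_back; auto|]; intro z; [apply creg_reg|]; apply Hc.
    + assert (H1 : T1 W) by (apply T1_back; auto; intro z; apply (T5_T4' _ (Hc z))).
      apply T5_back; auto.
    + assert (H1 : T1 W) by (apply T1_back; auto; intro z; apply Hc).
      split; [split; auto|].
      * apply normal_back; auto; intro z; apply Hc.
      * apply gdelta_back; auto; intro z; apply Hc.
Qed.

Lemma recon_three (X Z : TopSpace) : at_least_three X -> reconstruction Z X -> at_least_three Z.
Proof.
  intros [a [b [c [hab [hac hbc]]]]] HR.
  destruct (proj2 (HR (remove_point X a)) (card_rp X a)) as [z Hh].
  destruct Hh as [f [g [gf _]]].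
  assert (hb : b <> a) by auto. assert (hc : c <> a) by auto.
  exists z, (proj1_sig (f (inc b hb))), (proj1_sig (f (inc c hc))).
  split; [|split].
  - intro E. apply (proj2_sig (f (inc b hb))); auto.
  - intro E. apply (proj2_sig (f (inc c hc))); auto.
  - intro E. apply hbc. destruct (sub_embed Z (fun y => y <> z)) as [i _].
    apply i in E.
    pose proof (f_equal g E) as E'. rewrite !gf in E'. exact (f_equal (@proj1_sig _ _) E').
Qed.

Theorem theorem3p1 (X : TopSpace) (H3 : at_least_three X) :
  (forall i : sep_index,
     (T_ i X <-> (forall Y : TopSpace, is_card Y X -> T_ i Y)) /\
     (forall Z : TopSpace, reconstruction Z X -> (T_ i X <-> T_ i Z))) /\
  ((forall Y : TopSpace, is_card Y X -> T3 Y) ->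
   (exists Y : TopSpace, is_card Y X /\ T4 Y) -> T4 X).
Proof.
  split.
  - intro i; split; [apply main_equiv; auto|].
    intros Z HR. rewrite (main_equiv X H3 i), (main_equiv Z (recon_three X Z H3 HR) i).
    split; intros H Y HY; apply H, HR; auto.
  - intros HC [Y [[x Hh] H4]].
    assert (H1 : T1 X) by (apply T1_back; auto; intro z; apply (HC _ (card_rp X z))).
    split; auto. apply (T4_part X H1) with (x := x); [apply reg_back; auto; intro z; apply (HC _ (card_rp X z))|].
    destruct (homeo_embed _ _ (homeo_sym _ _ Hh)) as [g [Hg Hs]].
    apply (normal_surj (T := Y) g Hg Hs), H4.
Qed.
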